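(* For any stationary process over a finite alphabet and every $L\ge2$, $$\mathbf{E}'(L)\le\mathbf{E}(L)\le\mathbf{E}.$$
   Context: $H(L)$ is the Shannon entropy (base 2) of $S_1\cdots S_L$, $H(0)=0$; $h_\mu(L)=H(L)-H(L-1)$; $h_\mu=\lim H(L)/L$; $\mathbf{E}=\sum_{L=1}^\infty[h_\mu(L)-h_\mu]$. Finite-$L$ estimates: $\mathbf{E}(L)=H(L)-L\,h_\mu(L)$; for even $L$, $\mathbf{E}'(L)=I[S_1\cdots S_{L/2};\,S_{L/2+1}\cdots S_L]$ (mutual information between the two halves of an $L$-block), and for odd $L$, $\mathbf{E}'(L)=\mathbf{E}'(L-1)$. *)

(* Defs.v *)
From HB Require Import structures.
From mathcomp Require Import all_boot all_order all_algebra.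
From mathcomp Require Import all_classical all_reals all_analysis.
Set Implicit Arguments. Unset Strict Implicit. Unset Printing Implicit Defensive.
Import Order.TTheory GRing.Theory Num.Theory numFieldNormedType.Exports.
Local Open Scope ring_scope.

Section Defs.
Variables (R : realType) (A : finType).

(* A stationary process over the finite alphabet A, given by its cylinder
   (word) probabilities: P w = Prob(S_1 ... S_|w| = w).  Kolmogorov
   consistency + shift invariance characterise a stationary measure. *)
Definition stationary_process (P : seq A -> R) : Prop :=
  [/\ forall w, 0 <= P w,
      P [::] = 1,
      forall w, P w = \sum_(a : A) P (rcons w a)
    & forall w, P w = \sum_(a : A) P (a :: w)  ].

Definition log2 (x : R) : R := ln x / ln 2.

Definition xlog2x (p : R) : R := if p == 0 then 0 else p * log2 p.

Definition block_entropy (P : seq A -> R) (L : nat) : R :=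
  - \sum_(w : L.-tuple A) xlog2x (P w).

Definition entropy_gain (P : seq A -> R) (L : nat) : R :=
  block_entropy P L - block_entropy P L.-1.

Definition entropy_rate (P : seq A -> R) : R :=
  limn (fun L : nat => block_entropy P L / L%:R).

Definition excess_entropy (P : seq A -> R) : \bar R :=
  (\sum_(1 <= L <oo) ((entropy_gain P L - entropy_rate P)%:E))%E.

Definition excess_entropy_L (P : seq A -> R) (L : nat) : R :=
  block_entropy P L - L%:R * entropy_gain P L.

Definition halves_mutual_info (P : seq A -> R) (m : nat) : R :=
  \sum_(x : m.-tuple A) \sum_(y : m.-tuple A)
    let pxy := P (x ++ y) in
    let px := \sum_(y' : m.-tuple A) P (x ++ y') in
    let py := \sum_(x' : m.-tuple A) P (x' ++ y) in
    if pxy == 0 then 0 else pxy * log2 (pxy / (px * py)).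

Definition excess_entropy'_L (P : seq A -> R) (L : nat) : R :=
  if odd L then halves_mutual_info P (L.-1)./2
  else halves_mutual_info P L./2.

End Defs.

(* Main.v *)
Require Import Defs.
From HB Require Import structures.
From mathcomp Require Import all_boot all_order all_algebra.
From mathcomp Require Import all_classical all_reals all_analysis.
From mathcomp Require Import lra ring zify.
Import Order.TTheory GRing.Theory Num.Theory numFieldNormedType.Exports.
Local Open Scope ring_scope.
Section S.
Variables (R : realType) (A : finType).
Definition S n (F : seq A -> R) := \sum_(w : n.-tuple A) F w.

Lemma S0 F : S 0 F = F [::].
Proof.
rewrite /S (eq_bigr (fun _ => F [::])); last by move=> w _; rewrite tuple0.
by rewrite sumr_const card_tuple expn0.
Qed.

Lemma Scons n F : S n.+1 F = \sum_(a : A) S n (fun w => F (a :: w)).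
Proof.
rewrite /S pair_big /=.
rewrite (reindex (fun p : A * n.-tuple A => [tuple of p.1 :: p.2])) //=.
exists (fun t : n.+1.-tuple A => (thead t, [tuple of behead t])).
  by case=> a w _ /=; congr pair; apply: val_inj.
by move=> t _; rewrite [in RHS](tuple_eta t).
Qed.

Lemma Srcons n F : S n.+1 F = S n (fun w => \sum_(a : A) F (rcons w a)).
Proof.
elim: n F => [|n IH] F.
  by rewrite Scons S0; apply: eq_bigr => a _; rewrite S0.
rewrite Scons [in RHS]Scons; apply: eq_bigr => a _; by rewrite IH.
Qed.

Lemma Scat m n F : S (m + n) F = S m (fun x => S n (fun y => F (x ++ y))).
Proof.
elim: m F => [|m IH] F; first by rewrite S0.
rewrite [in RHS]Scons -[(m.+1 + n)%N]/((m + n).+1) Scons.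
by apply: eq_bigr => a _; rewrite IH.
Qed.

Lemma S_sum n F G : S n (fun w => F w + G w) = S n F + S n G.
Proof. by rewrite /S big_split. Qed.
End S.
Arguments S {R A}.
Section K.
Variable R : realType.

Lemma ln_le_sub1 (y : R) : 0 < y -> ln y <= y - 1.
Proof.
move=> y0; have := @le_ln1Dx R (y - 1).
have -> : 1 + (y - 1) = y by ring. apply; lra.
Qed.

Lemma term_ineq (r a b T : R) : 0 <= r -> r <= a -> r <= b -> 0 < T ->
  r - a * b / T <= r * (ln r + ln T - ln a - ln b).
Proof.
move=> r0 ra rb T0; have [->|rpos] := eqVneq r 0.
  rewrite mul0r sub0r oppr_le0 divr_ge0 // ?mulr_ge0 ?(ltW T0) //.
  by rewrite (le_trans r0). by rewrite (le_trans r0).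
have r0' : 0 < r by rewrite lt_def rpos r0.
have a0 : 0 < a by apply: lt_le_trans ra.
have b0 : 0 < b by apply: lt_le_trans rb.
set y := a * b / (r * T).
have y0 : 0 < y by rewrite /y divr_gt0 // mulr_gt0.
have ly : ln y = ln a + ln b - ln r - ln T.
  have lM : forall u v : R, 0 < u -> 0 < v -> ln (u * v) = ln u + ln v.
    by move=> u v u0 v0; apply: lnM; rewrite posrE.
  have lV : forall u : R, 0 < u -> ln (u^-1) = - ln u.
    by move=> u u0; apply: lnV; rewrite posrE.
  rewrite /y (lM (a*b)); last by rewrite invr_gt0 mulr_gt0.
    rewrite (lM a b) // (lV (r*T)); last by rewrite mulr_gt0.
    rewrite (lM r T) //; lra.
  by rewrite mulr_gt0.
have := @ln_le_sub1 y y0; rewrite ly => h.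
have e : r * y = a * b / T by rewrite /y; field; rewrite ?gt_eqF.
have : r * (ln a + ln b - ln r - ln T) <= r * (y - 1) by rewrite ler_pM2l.
rewrite -e => h2; lra.
Qed.

Definition xl (p : R) := p * ln p.

Lemma le_sum1 (I : finType) (F : I -> R) i : (forall k, 0 <= F k) -> F i <= \sum_k F k.
Proof.
move=> F0; rewrite (bigD1 i) //= lerDl; apply: sumr_ge0 => k _; exact: F0.
Qed.

Lemma KL (I J : finType) (r : I -> J -> R) : (forall i j, 0 <= r i j) ->
  \sum_i xl (\sum_j r i j) + \sum_j xl (\sum_i r i j) <=
  \sum_i \sum_j xl (r i j) + xl (\sum_i \sum_j r i j).
Proof.
move=> r0.
set ra := fun i => \sum_j r i j.
set rb := fun j => \sum_i r i j.
rewrite -/(ra _) -/(rb _).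
set T := \sum_i ra i.
have hT : \sum_j rb j = T by rewrite /rb /T /ra exchange_big.
have ra0 : forall i, 0 <= ra i by move=> i; apply: sumr_ge0.
have rb0 : forall j, 0 <= rb j by move=> j; apply: sumr_ge0.
have T0 : 0 <= T by apply: sumr_ge0.
have rai : forall i j, r i j <= ra i by move=> i j; apply: le_sum1.
have rbj : forall i j, r i j <= rb j by move=> i j; exact: (@le_sum1 I (fun k => r k j) i (fun k => r0 k j)).
have [T00|Tpos] := eqVneq T 0.
  have raz : forall i, ra i = 0 by move=> i; apply: (psumr_eq0P (fun i _ => ra0 i) T00).
  have rz : forall i j, r i j = 0.
    by move=> i j; apply: (psumr_eq0P (fun j _ => r0 i j) (raz i)).
  have rbz : forall j, rb j = 0 by move=> j; apply: big1 => i _; apply: rz.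
  rewrite T00 /xl !mul0r addr0.
  rewrite big1 ?add0r; last by move=> i _; have := raz i; rewrite /ra => ->; rewrite mul0r.
  rewrite big1; last by move=> j _; have := rbz j; rewrite /rb => ->; rewrite mul0r.
  by rewrite big1 // => i _; rewrite big1 // => j _; rewrite rz mul0r.
have Tp : 0 < T by rewrite lt_def Tpos T0.
have E1 : \sum_i \sum_j r i j * ln T = xl T.
  rewrite /xl /T mulr_suml; apply: eq_bigr => i _; by rewrite mulr_suml.
have E2 : \sum_i \sum_j r i j * ln (ra i) = \sum_i xl (ra i).
  by apply: eq_bigr => i _; rewrite /xl -mulr_suml.
have E3 : \sum_i \sum_j r i j * ln (rb j) = \sum_j xl (rb j).
  by rewrite exchange_big; apply: eq_bigr => j _; rewrite /xl -mulr_suml.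
have E : \sum_i \sum_j r i j * (ln (r i j) + ln T - ln (ra i) - ln (rb j)) =
   \sum_i \sum_j xl (r i j) + xl T - \sum_i xl (ra i) - \sum_j xl (rb j).
  rewrite -E1 -E2 -E3 -big_split -!sumrB /=; apply: eq_bigr => i _.
  rewrite -big_split -!sumrB /=; apply: eq_bigr => j _; rewrite /xl; ring.
have Z : \sum_i \sum_j (r i j - ra i * rb j / T) = 0.
  rewrite (eq_bigr (fun i => \sum_j r i j - \sum_j ra i * rb j / T)); last first.
    by move=> i _; rewrite sumrB.
  rewrite sumrB.
  have -> : \sum_i \sum_j r i j = T by [].
  rewrite (eq_bigr (fun i => ra i * T / T)); last first.
    by move=> i _; rewrite -mulr_suml -mulr_sumr hT.
  by rewrite -mulr_suml -mulr_suml mulfK // subrr.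
have L : \sum_i \sum_j (r i j - ra i * rb j / T) <=
   \sum_i \sum_j r i j * (ln (r i j) + ln T - ln (ra i) - ln (rb j)).
  apply: ler_sum => i _; apply: ler_sum => j _; apply: term_ineq => //.
move: L; rewrite Z E; lra.
Qed.
End K.
Arguments xl {R}.
Section Abs.
Variables (R : realType) (Hs : nat -> R).
Hypotheses (H0 : Hs 0 = 0) (Hd0 : forall k, Hs k <= Hs k.+1)
  (Hdd : forall k, Hs k.+2 - Hs k.+1 <= Hs k.+1 - Hs k).

Let d k := Hs k.+1 - Hs k.

Lemma d_ge0 k : 0 <= d k.
Proof. by rewrite /d subr_ge0. Qed.

Lemma d_mono i j : (i <= j)%N -> d j <= d i.
Proof.
move=> /subnKC <-; elim: (j - i)%N => [|q IH]; first by rewrite addn0.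
by rewrite addnS (le_trans _ IH) //; exact: Hdd.
Qed.

Lemma Hs_shift m n : Hs (m + n) - Hs m = \sum_(k < n) d (m + k).
Proof.
elim: n => [|n IH]; first by rewrite big_ord0 addn0 subrr.
rewrite big_ord_recr /= -IH /d addnS; lra.
Qed.

Lemma Hs_sum n : Hs n = \sum_(k < n) d k.
Proof. by have := Hs_shift 0 n; rewrite H0 subr0. Qed.

Lemma Hs_ub p q : Hs (p.+1 + q) <= Hs p.+1 + q%:R * d p.
Proof.
rewrite -lerBlDl Hs_shift.
rewrite mulr_natl -[in X in _ <= X](card_ord q) -sumr_const; apply: ler_sum => k _.
apply: d_mono; exact: (leq_trans (leqnSn p) (leq_addr k p.+1)).
Qed.

Let h k := Hs k - Hs k.-1.
Let E L := Hs L - L%:R * h L.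

Lemma A1 m : (1 <= m)%N -> 2 * Hs m - Hs (m + m) <= E (m + m).
Proof.
case: m => // p _; rewrite /E /h.
have -> : (p.+1 + p.+1).-1 = (p.+1 + p)%N by rewrite addnS.
have hs := Hs_shift p.+1 p.+1.
have : p.+1%:R * (Hs (p.+1 + p.+1) - Hs (p.+1 + p)) <= Hs (p.+1 + p.+1) - Hs p.+1.
  have -> : Hs (p.+1 + p.+1) - Hs (p.+1 + p) = d (p.+1 + p) by rewrite /d addnS.
  rewrite hs.
  have -> : p.+1%:R * d (p.+1 + p) = \sum_(k < p.+1) d (p.+1 + p) by rewrite sumr_const card_ord mulr_natl.
  apply: ler_sum => k _.
  apply: d_mono; have := ltn_ord k; lia.
rewrite natrD; lra.
Qed.

Lemma A2 p : E p.+1 <= E p.+2.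
Proof.
rewrite /E /h /=.
have : d p.+1 <= d p by exact: Hdd.
rewrite /d => hd.
have : 0 <= p.+1%:R * ((Hs p.+1 - Hs p) - (Hs p.+2 - Hs p.+1)).
  by apply: mulr_ge0 => //; lra.
rewrite -[p.+2]addn1 natrD; lra.
Qed.

Let rate := limn (fun n => Hs n / n%:R).

Lemma b_noninc : nonincreasing_seq (fun n => Hs n.+1 / n.+1%:R).
Proof.
apply/nonincreasing_seqP => n.
rewrite ler_pdivrMr // mulrAC ler_pdivlMr //.
have e : Hs n.+2 = Hs n.+1 + d n.+1 by rewrite /d; ring.
have : n.+1%:R * d n.+1 <= Hs n.+1.
  rewrite Hs_sum.
  have -> : n.+1%:R * d n.+1 = \sum_(k < n.+1) d n.+1 by rewrite sumr_const card_ord mulr_natl.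
  apply: ler_sum => k _; apply: d_mono; have := ltn_ord k; lia.
rewrite e -[n.+2]addn1 natrD; lra.
Qed.

Lemma Hs_ge0 n : 0 <= Hs n.
Proof. rewrite Hs_sum; apply: sumr_ge0 => k _; exact: d_ge0. Qed.

Lemma rate_le p : rate <= d p.
Proof.
set b := fun n => Hs n.+1 / n.+1%:R.
have cb : cvgn b.
  apply: nonincreasing_is_cvgn; first exact: b_noninc.
  exists 0 => _ [n _ <-]; rewrite /b divr_ge0 //; exact: Hs_ge0.
have rb : rate = limn b.
  have ca : ((fun n => Hs n / n%:R) @ \oo --> limn b)%classic.
    by rewrite -cvg_shiftS; exact: cb.
  by rewrite /rate (cvg_lim _ ca).
have lb : forall n, rate <= b n.
  by move=> n; rewrite rb; apply: nonincreasing_cvgn_ge => //; exact: b_noninc.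
have key : forall q, (p.+1 + q)%:R * (rate - d p) <= Hs p.+1 - p.+1%:R * d p.
  move=> q; have := lb (p + q)%N; rewrite /b -addSn.
  rewrite ler_pdivlMr // => h1; have := Hs_ub p q.
  rewrite natrD; lra.
rewrite leNgt; apply/negP => hlt.
set C := Hs p.+1 - p.+1%:R * d p.
set del := rate - d p.
have dp : 0 < del by rewrite /del subr_gt0.
have := key (Num.truncn (C / del)).
rewrite -/C -/del.
have := truncnS_gt (C / del).
rewrite ltr_pdivrMr // => h2 h3.
have : (Num.truncn (C / del)).+1%:R * del <= (p.+1 + Num.truncn (C / del))%:R * del.
  by rewrite ler_pM2r // ler_nat; lia.
lra.
Qed.

Lemma A3 L : (1 <= L)%N ->
  ((E L)%:E <= \sum_(1 <= k <oo) ((h k - rate)%:E))%E.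
Proof.
move=> L1.
apply: (@le_trans _ _ (\sum_(1 <= k < L.+1) ((h k - rate)%:E))%E); last first.
  apply: nneseries_lim_ge => n n1 _; rewrite lee_fin subr_ge0.
  case: n n1 => // n _; rewrite /h /=; exact: rate_le.
rewrite sumEFin lee_fin big_add1 /= big_mkord.
have -> : \sum_(i < L) (h i.+1 - rate) = Hs L - L%:R * rate.
  rewrite sumrB sumr_const card_ord -mulr_natl Hs_sum; congr (_ - _); by rewrite mulr1 mulr_natl.
case: L L1 => // p _; rewrite /E.
have : rate <= h p.+1 by rewrite /h /=; exact: rate_le.
move=> hr; have : p.+1%:R * rate <= p.+1%:R * h p.+1 by rewrite ler_pM2l.
lra.
Qed.
End Abs.

Section Conc.
Variables (R : realType) (A : finType) (P : seq A -> R).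
Hypothesis hP : stationary_process P.

Let G n := S n (fun w => xl (P w)).

Lemma ln2_gt0 : 0 < ln (2 : R).
Proof. by apply: ln_gt0; lra. Qed.

Lemma xlog2xE (p : R) : xlog2x p = xl p / ln 2.
Proof.
rewrite /xlog2x /log2 /xl; case: eqP => [->|_]; first by rewrite !mul0r.
by rewrite mulrA.
Qed.

Lemma HsE n : block_entropy P n = - G n / ln 2.
Proof.
rewrite /block_entropy /G /S mulNr mulr_suml; congr (- _).
by apply: eq_bigr => w _; rewrite xlog2xE.
Qed.

Lemma G0 : G 0 = 0.
Proof. case: hP => _ P1 _ _; by rewrite /G S0 P1 /xl ln1 mulr0. Qed.

Lemma xl_sum_le (I : finType) (x : I -> R) : (forall i, 0 <= x i) ->
  \sum_i xl (x i) <= xl (\sum_i x i).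
Proof.
move=> x0; rewrite /xl mulr_suml; apply: ler_sum => i _.
have [->|xn] := eqVneq (x i) 0; first by rewrite !mul0r.
have xp : 0 < x i by rewrite lt_def xn x0.
have sp : x i <= \sum_k x k by apply: le_sum1.
rewrite ler_pM2l // ler_ln ?posrE //; exact: lt_le_trans sp.
Qed.

Lemma G_dec n : G n.+1 <= G n.
Proof.
case: hP => P0 _ Pc _.
rewrite /G Srcons /S; apply: ler_sum => w _.
rewrite [in X in _ <= X](Pc w); apply: xl_sum_le => a; exact: P0.
Qed.

Lemma G_KL n : G n.+1 + G n.+1 <= G n.+2 + G n.
Proof.
case: hP => P0 _ Pc Ps.
have step : forall u : seq A,
   \sum_a xl (P (a :: u)) + \sum_b xl (P (rcons u b)) <=
   \sum_a \sum_b xl (P (a :: rcons u b)) + xl (P u).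
  move=> u.
  have := @KL R A A (fun a b => P (a :: rcons u b)) (fun a b => P0 _).
  have e1 : forall a, \sum_b P (a :: rcons u b) = P (a :: u).
    by move=> a; rewrite [RHS](Pc (a :: u)).
  have e2 : forall b, \sum_a P (a :: rcons u b) = P (rcons u b).
    by move=> b; rewrite [RHS](Ps (rcons u b)).
  have f1 : \sum_a xl (\sum_b P (a :: rcons u b)) = \sum_a xl (P (a :: u)).
    by apply: eq_bigr => a _; rewrite e1.
  have f2 : \sum_b xl (\sum_a P (a :: rcons u b)) = \sum_b xl (P (rcons u b)).
    by apply: eq_bigr => b _; rewrite e2.
  have f3 : \sum_a \sum_b P (a :: rcons u b) = P u.
    by rewrite (eq_bigr (fun a => P (a :: u))) ?(Ps u) // => a _; rewrite e1.
  by rewrite f1 f2 f3.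
have e1 : S n (fun u => \sum_a xl (P (a :: u))) = G n.+1.
  by rewrite /G Scons /S exchange_big.
have e2 : S n (fun u => \sum_b xl (P (rcons u b))) = G n.+1.
  by rewrite /G Srcons.
have e3 : S n (fun u => \sum_a \sum_b xl (P (a :: rcons u b))) = G n.+2.
  rewrite /G Scons; rewrite /S exchange_big; apply: eq_bigr => a _.
  by rewrite -[RHS]/(S n.+1 (fun w => xl (P (a :: w)))) Srcons.
rewrite -{1}e1 -e2 -e3 -S_sum -S_sum /S; apply: ler_sum => u _; exact: step.
Qed.

Lemma margL m (x : seq A) : \sum_(y : m.-tuple A) P (x ++ y) = P x.
Proof.
case: hP => _ _ Pc _.
rewrite -/(S m (fun y => P (x ++ y))).
elim: m => [|m IH]; first by rewrite S0 cats0.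
rewrite Srcons -[RHS]IH; congr S; apply: funext => y.
by rewrite [RHS](Pc (x ++ y)); apply: eq_bigr => a _; rewrite rcons_cat.
Qed.

Lemma margR m (y : seq A) : \sum_(x : m.-tuple A) P (x ++ y) = P y.
Proof.
case: hP => _ _ _ Ps.
rewrite -/(S m (fun x => P (x ++ y))).
elim: m => [|m IH]; first by rewrite S0.
rewrite Scons /S exchange_big /= -[RHS]IH /S; apply: eq_bigr => x _.
by rewrite [RHS](Ps (x ++ y)).
Qed.

Lemma MI m : halves_mutual_info P m = (G (m + m) - G m - G m) / ln 2.
Proof.
have P0 : forall w, 0 <= P w by case: hP.
have c0 := ln2_gt0.
have lM : forall u v : R, 0 < u -> 0 < v -> ln (u * v) = ln u + ln v.
  by move=> u v u0 v0; apply: lnM; rewrite posrE.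
have lV : forall u : R, 0 < u -> ln (u^-1) = - ln u.
  by move=> u u0; apply: lnV; rewrite posrE.
rewrite /halves_mutual_info /=.
transitivity (\sum_(x : m.-tuple A) \sum_(y : m.-tuple A)
   (xl (P (x ++ y)) - P (x ++ y) * ln (P x) - P (x ++ y) * ln (P y)) / ln 2).
  apply: eq_bigr => x _; apply: eq_bigr => y _.
  rewrite margL margR.
  case: eqP => [->|pn]; first by rewrite /xl !mul0r !subr0 mul0r.
  have pp : 0 < P (x ++ y) by rewrite lt_def P0 andbT; apply/eqP.
  have px : P (x ++ y) <= P x.
    rewrite -(margL m x); exact: (@le_sum1 _ _ (fun y' : m.-tuple A => P (x ++ y')) y (fun _ => P0 _)).
  have py : P (x ++ y) <= P y.
    rewrite -(margR m y); exact: (@le_sum1 _ _ (fun x' : m.-tuple A => P (x' ++ y)) x (fun _ => P0 _)).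
  have pxp : 0 < P x by exact: lt_le_trans px.
  have pyp : 0 < P y by exact: lt_le_trans py.
  rewrite /log2 (lM (P (x ++ y))) //; last by rewrite invr_gt0 mulr_gt0.
  rewrite (lV (P x * P y)); last by rewrite mulr_gt0.
  rewrite (lM (P x) (P y)) // /xl.
  by field; rewrite gt_eqF.
under eq_bigr => x _ do rewrite -mulr_suml.
rewrite -mulr_suml; congr (_ * _).
rewrite (eq_bigr (fun x : m.-tuple A => \sum_(y : m.-tuple A) xl (P (x ++ y))
   - \sum_(y : m.-tuple A) P (x ++ y) * ln (P x)
   - \sum_(y : m.-tuple A) P (x ++ y) * ln (P y))); last first.
  by move=> x _; rewrite !sumrB.
rewrite !sumrB.
congr (_ - _ - _).
- by rewrite /G Scat.
- rewrite /G /S; apply: eq_bigr => x _; by rewrite -mulr_suml margL.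
- rewrite exchange_big /G /S; apply: eq_bigr => y _; by rewrite -mulr_suml margR.
Qed.

Lemma conc_facts :
  [/\ block_entropy P 0 = 0,
      forall k, block_entropy P k <= block_entropy P k.+1 &
      forall k, block_entropy P k.+2 - block_entropy P k.+1 <=
                block_entropy P k.+1 - block_entropy P k].
Proof.
have c0 := ln2_gt0.
split.
- by rewrite HsE G0 oppr0 mul0r.
- move=> k; rewrite !HsE ler_pM2r ?invr_gt0 // lerN2; exact: G_dec.
- move=> k; rewrite !HsE -!mulrBl ler_pM2r ?invr_gt0 //.
  have := G_KL k; lra.
Qed.

Lemma MIe m : halves_mutual_info P m = 2 * block_entropy P m - block_entropy P (m + m).
Proof. rewrite MI !HsE; have := ln2_gt0 => c0; field; rewrite gt_eqF //. Qed.

End Conc.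

Theorem lemma3 (R : realType) (A : finType) (P : seq A -> R)
  (hP : stationary_process P) (L : nat) (hL : (2 <= L)%N) :
  excess_entropy'_L P L <= excess_entropy_L P L /\
  ((excess_entropy_L P L)%:E <= excess_entropy P)%E.
Proof.
have [H0 Hd0 Hdd] := @conc_facts R A P hP.
split; last first.
  exact: (@A3 R (block_entropy P) H0 Hd0 Hdd L (leq_trans (isT : (1 <= 2)%N) hL)).
rewrite /excess_entropy'_L; case: ifP => oL.
- set m := (L.-1)./2.
  have eL : L = (m + m).+1.
    have := odd_double_half L.-1.
    have Lp : L = L.-1.+1 by rewrite prednK //; lia.
    have : odd L.-1 = false by move: oL; rewrite {1}Lp /= => /negbTE.
    move=> -> /=; rewrite add0n -addnn -/m => e; rewrite {1}Lp e //.
  clearbody m; subst L.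
  case: m hL oL => [|q] // _ _.
  have h1 := @A1 R (block_entropy P) Hdd q.+1 (isT : (1 <= q.+1)%N).
  have h2 := @A2 R (block_entropy P) Hdd (q + q.+1)%N.
  rewrite -addSn in h2; rewrite (@MIe R A P hP); exact: (le_trans h1 h2).
- set m := L./2.
  have eL : L = (m + m)%N.
    have := odd_double_half L; rewrite oL add0n -addnn -/m => e; by rewrite -{1}e.
  clearbody m; subst L.
  case: m hL oL => [|q] // _ _.
  rewrite (@MIe R A P hP); exact: (@A1 R (block_entropy P) Hdd q.+1 (isT : (1 <= q.+1)%N)).
Qed.
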